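(* Let $G$ be a finite-by-abelian profinite group (i.e. $G$ has a finite normal subgroup $T$ with $G/T$ abelian). Then $G$ is central-by-finite, i.e. the center of $G$ has finite index in $G$. *)

(* Defs.v *)
(* topology from mathcomp-analysis; groups given
   by explicit operations (MathComp finGroupType is only for finite groups). *)
From HB Require Import structures.
From mathcomp Require Import all_boot all_order all_algebra.
From mathcomp Require Import all_classical all_reals topology.
Set Implicit Arguments. Unset Strict Implicit. Unset Printing Implicit Defensive.
Local Open Scope classical_set_scope.

Record is_group (G : Type) (mul : G -> G -> G) (one : G) (inv : G -> G) : Prop := {
  grp_mulA : forall x y z, mul x (mul y z) = mul (mul x y) z;
  grp_mul1g : forall x, mul one x = x;
  grp_mulg1 : forall x, mul x one = x;
  grp_mulVg : forall x, mul (inv x) x = one;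
  grp_mulgV : forall x, mul x (inv x) = one }.

Definition is_topological_group (G : topologicalType)
  (mul : G -> G -> G) (one : G) (inv : G -> G) : Prop :=
  [/\ is_group mul one inv,
      continuous (fun p : G * G => mul p.1 p.2) &
      continuous inv].

Definition is_profinite_group (G : topologicalType)
  (mul : G -> G -> G) (one : G) (inv : G -> G) : Prop :=
  [/\ is_topological_group mul one inv,
      compact [set: G],
      hausdorff_space G &
      totally_disconnected [set: G]].

Definition is_subgroup (G : Type) (mul : G -> G -> G) (one : G) (inv : G -> G)
  (H : set G) : Prop :=
  [/\ H one, (forall x y, H x -> H y -> H (mul x y)) & (forall x, H x -> H (inv x))].

Definition is_normal_subgroup (G : Type) (mul : G -> G -> G) (one : G) (inv : G -> G)
  (H : set G) : Prop :=
  is_subgroup mul one inv H /\ forall g h, H h -> H (mul (inv g) (mul h g)).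

(* G/H is abelian: the cosets (xy)H and (yx)H coincide for all x, y. *)
Definition quotient_abelian (G : Type) (mul : G -> G -> G) (H : set G) : Prop :=
  forall x y, exists2 h, H h & mul x y = mul (mul y x) h.

Definition center (G : Type) (mul : G -> G -> G) : set G :=
  [set z | forall g, mul z g = mul g z].

Definition finite_index (G : Type) (mul : G -> G -> G) (inv : G -> G) (H : set G) : Prop :=
  exists2 F : set G, finite_set F & forall g, exists2 f, F f & H (mul (inv f) g).

(* Main.v *)
Require Import Defs.
From HB Require Import structures.
From mathcomp Require Import all_boot all_order all_algebra.
From mathcomp Require Import all_classical all_reals topology.
From mathcomp Require Import unstable finmap.
Local Open Scope classical_set_scope.

Definition pt_of (G : topologicalType) (x : G) : Type := G.
HB.instance Definition _ (G : topologicalType) (x : G) := Topological.copy (@pt_of G x) G.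
HB.instance Definition _ (G : topologicalType) (x : G) := isPointed.Build (@pt_of G x) x.
Lemma cover_of (G : topologicalType) (x : G) : compact [set: G] -> cover_compact [set: G].
Proof. move=> cpt. have : @compact (@pt_of G x) setT by exact: cpt.
rewrite compact_cover. exact. Qed.

Theorem lemma2p7 (G : topologicalType) (mul : G -> G -> G) (one : G) (inv : G -> G)
  (T : set G) :
  is_profinite_group mul one inv ->
  is_normal_subgroup mul one inv T ->
  finite_set T ->
  quotient_abelian mul T ->
  finite_index mul inv (center mul).
Proof.
move=> [[grp cmul cinv] cpt hG _] _ finT qab.
have mA := grp_mulA grp; have m1g := grp_mul1g grp; have mg1 := grp_mulg1 grp.
have mVg := grp_mulVg grp; have mgV := grp_mulgV grp.
pose c := fun p : G * G => mul (inv (mul p.2 p.1)) (mul p.1 p.2).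
have cc : continuous c.
  move=> p.
  apply: (continuous_comp (f := fun p : G * G => (inv (mul p.2 p.1), mul p.1 p.2))
                          (g := fun q : G * G => mul q.1 q.2)); last exact: cmul.
  apply: cvg_pair.
    apply: (continuous_comp (f := fun p : G * G => mul p.2 p.1) (g := inv)); last exact: cinv.
    apply: (continuous_comp (f := @swap G G) (g := fun q : G * G => mul q.1 q.2)).
      exact: swap_continuous.
    exact: cmul.
  exact: cmul.
have cT : forall u v, T (c (u, v)).
  move=> u v; rewrite /c /=; have [h Th ->] := qab u v.
  by rewrite mA mVg m1g.
have cE : forall u v, mul u v = mul (mul v u) (c (u, v)).
  by move=> u v; rewrite /c /= mA mgV m1g.
have c1 : forall x, c (one, x) = one.
  by move=> x; rewrite /c /= mg1 m1g mVg.
pose W := ~` (T `\ one).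
have nW : nbhs one W.
  apply: open_nbhs_nbhs; split; last by rewrite /W /= => -[_]; apply.
  apply: closed_openC.
  have acc : accessible_space G by apply: hausdorff_accessible.
  apply: (proj1 accessible_finite_set_closed acc).
  exact: finite_setD.
have cW : forall u v, W (c (u, v)) -> mul u v = mul v u.
  move=> u v Wc; rewrite cE; have -> : c (u, v) = one.
    apply: contrapT => neq; apply: Wc; split; [exact: cT | exact: neq].
  by rewrite mg1.
have step1 : forall x : G, exists P : set G * set G,
    [/\ nbhs one P.1, nbhs x P.2 & forall u v, P.1 u -> P.2 v -> mul u v = mul v u].
  move=> x.
  have := cc (one, x) W; rewrite c1 => /(_ nW).
  case=> [[P1 P2]] /= [nP1 nP2] sub.
  exists (P1, P2); split => // u v Pu Pv; apply: cW.
  exact: (sub (u, v)).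
have [P HP] := choice step1.
have cptc := @cover_of G one cpt.
have [D' _ cov] : finite_subset_cover [set: G] (fun x => interior (P x).2) [set: G].
  apply: cptc => [i _|x _]; first exact: open_interior.
  exists x => //; have [_ hx _] := HP x; exact: hx.
pose U := \bigcap_(i in [set` D']) (P i).1.
have nU : nbhs one U.
  apply: filter_bigI => i _; by case: (HP i).
have UZ : forall u, U u -> center mul u.
  move=> u Uu g; have [i Di gi] := cov g I.
  case: (HP i) => _ _ Hc; apply: Hc; first exact: Uu.
  exact: interior_subset gi.
have step2 : forall g : G, nbhs g (fun y => U (mul (inv g) y)).
  move=> g.
  have hc : {for g, continuous (fun y => mul (inv g) y)}.
    apply: (continuous_comp (f := fun y : G => (inv g, y)) (g := fun q : G * G => mul q.1 q.2)); last exact: cmul.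
    apply: cvg_pair; [exact: cvg_cst | exact: cvg_id].
  apply: hc; rewrite /= mVg; exact: nU.
have [D2 _ cov2] : finite_subset_cover [set: G] (fun g => interior (fun y => U (mul (inv g) y))) [set: G].
  apply: cptc => [i _|x _]; first exact: open_interior.
  exists x => //; exact: step2.
exists [set` D2]; first exact: finite_fset.
move=> g; have [i Di gi] := cov2 g I.
exists i => //; apply: UZ; exact: interior_subset gi.
Qed.
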